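(* Let $M$ be a graded $R$-module. The natural map $\varphi=\phi^R\circ\psi^q$ is continuous with respect to the quasi-Zariski topology on $qp.Spec_g(M)$ and the Zariski topology on $Spec_g(\overline R)$; more precisely, for every graded ideal $I$ of $R$ containing $\mathrm{Ann}(M)$, $$\varphi^{-1}(V_{\overline R}^g(\overline I))=(\phi^R\circ\psi^q)^{-1}(V_{\overline R}^g(\overline I))=(\psi^q)^{-1}(qp\text{-}V_{\overline R}^g(\overline I))=qp\text{-}V_M^g(IM).$$
   Context: $R=\bigoplus_{g\in G}R_g$ is a graded commutative ring with identity graded by a group $G$, $h(R)=\bigcup_g R_g$; $M$ is a graded $R$-module, $h(M)$ its homogeneous elements. $Gr(I)$ is the graded radical of a graded ideal $I$. $Spec_g(R)$: graded prime ideals. $(K:_RM)=\{r: rM\subseteq K\}$. Graded prime submodule: proper graded $P$ with $rm\in P$ ($r\in h(R), m\in h(M)$) implying $m\in P$ or $r\in(P:_RM)$. $Gr_M(K)$: intersection of graded prime submodules containing $K$ ($M$ if none). Graded primeful property of $K$: for each graded prime $p\supseteq(K:_RM)$ there is a graded prime submodule $P\supseteq K$ with $(P:_RM)=p$. Graded quasi-primary submodule: proper graded $Q$ with $rm\in Q$ ($r\in h(R),m\in h(M)$) implying $r\in Gr((Q:_RM))$ or $m\in Gr_M(Q)$. $qp.Spec_g(M)$: graded quasi-primary submodules with the graded primeful property. $qp\text{-}V_M^g(K)=\{Q\in qp.Spec_g(M): Gr((Q:_RM))\supseteq Gr((K:_RM))\}$; the quasi-Zariski topology on $qp.Spec_g(M)$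 has closed sets exactly the $qp\text{-}V_M^g(K)$. $\overline R=R/\mathrm{Ann}(M)$, $\overline I=I/\mathrm{Ann}(M)$. $Spec_g(\overline R)$ has the Zariski topology with closed sets $V_{\overline R}^g(\overline I)=\{\overline p\in Spec_g(\overline R):\overline I\subseteq\overline p\}$. A graded quasi-primary ideal of a graded ring is a proper graded ideal $q$ such that $ab\in q$ with $a,b$ homogeneous implies $a\in Gr(q)$ or $b\in Gr(q)$; $qp.Spec_g(\overline R)$ is the set of these in $\overline R$. $\psi^q:qp.Spec_g(M)\to qp.Spec_g(\overline R)$, $\psi^q(Q)=\overline{(Q:_RM)}$; $\phi^R:qp.Spec_g(\overline R)\to Spec_g(\overline R)$, $\phi^R(\overline q)=\overline{Gr(q)}$; $qp\text{-}V_{\overline R}^g(\overline I)=(\phi^R)^{-1}(V_{\overline R}^g(\overline I))$, i.e. the set of $\overline q\in qp.Spec_g(\overline R)$ with $Gr(q)\supseteq I$. The natural map is $\varphi(Q)=\overline{(Gr_M(Q):_RM)}=\overline{Gr((Q:_RM))}$. *)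

(* Defs.v *)
From HB Require Import structures.
From mathcomp Require Import all_boot all_order all_algebra.
Set Implicit Arguments. Unset Strict Implicit. Unset Printing Implicit Defensive.
Import GRing.Theory.
Local Open Scope ring_scope.

Record group_law (G : eqType) := GroupLaw {
  gmul : G -> G -> G;
  gone : G;
  ginv : G -> G;
  gmulA : forall x y z, gmul x (gmul y z) = gmul (gmul x y) z;
  gmul1g : forall x, gmul gone x = x;
  gmulVg : forall x, gmul (ginv x) x = gone }.

(* ---------- G-graded commutative rings R = (+)_g R_g ----------
   rcomp g x is the g-component x_g of x; R_g = {x | rcomp g x = x}. *)
Record graded_ring (G : eqType) (GL : group_law G) (R : comPzRingType) := GradedRing {
  rcomp : G -> R -> R;
  rcompD : forall g x y, rcomp g (x + y) = rcomp g x + rcomp g y;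
  rcomp_id : forall g h x, rcomp g (rcomp h x) = if g == h then rcomp h x else 0;
  rcomp_dec : forall x, exists s : seq G,
     [/\ uniq s, (forall g, g \notin s -> rcomp g x = 0) & x = \sum_(g <- s) rcomp g x];
  rcompM : forall g h x y,
     rcomp (gmul GL g h) (rcomp g x * rcomp h y) = rcomp g x * rcomp h y }.

Record graded_module (G : eqType) (GL : group_law G) (R : comPzRingType)
    (GR : graded_ring GL R) (M : lmodType R) := GradedModule {
  mcomp : G -> M -> M;
  mcompD : forall g x y, mcomp g (x + y) = mcomp g x + mcomp g y;
  mcomp_id : forall g h x, mcomp g (mcomp h x) = if g == h then mcomp h x else 0;
  mcomp_dec : forall x, exists s : seq G,
     [/\ uniq s, (forall g, g \notin s -> mcomp g x = 0) & x = \sum_(g <- s) mcomp g x];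
  mcompZ : forall g h r x,
     mcomp (gmul GL g h) (rcomp GR g r *: mcomp h x) = rcomp GR g r *: mcomp h x }.

Definition psubset {T} (A B : T -> Prop) := forall x, A x -> B x.
Definition img {A B} (f : A -> B) (I : A -> Prop) : B -> Prop :=
  fun y => exists x, I x /\ f x = y.

Section GradedRingDefs.
Variables (G : eqType) (GL : group_law G) (R : comPzRingType) (GR : graded_ring GL R).

Definition homog (x : R) := exists g, rcomp GR g x = x.
Definition ideal (I : R -> Prop) :=
  [/\ I 0, (forall x y, I x -> I y -> I (x + y)) & (forall r x, I x -> I (r * x))].
Definition graded_ideal (I : R -> Prop) :=
  ideal I /\ (forall g x, I x -> I (rcomp GR g x)).
Definition proper {T} (I : T -> Prop) := exists x, ~ I x.
Definition Gr (I : R -> Prop) : R -> Prop :=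
  fun x => forall g, exists n : nat, I (rcomp GR g x ^+ n.+1).
Definition graded_prime_ideal (p : R -> Prop) :=
  [/\ graded_ideal p, proper p &
      forall a b, homog a -> homog b -> p (a * b) -> p a \/ p b].
Definition graded_qp_ideal (q : R -> Prop) :=
  [/\ graded_ideal q, proper q &
      forall a b, homog a -> homog b -> q (a * b) -> Gr q a \/ Gr q b].
Definition VZ (J : R -> Prop) : (R -> Prop) -> Prop :=
  fun p => graded_prime_ideal p /\ psubset J p.
End GradedRingDefs.

Section GradedModuleDefs.
Variables (G : eqType) (GL : group_law G) (R : comPzRingType) (GR : graded_ring GL R)
  (M : lmodType R) (GM : graded_module GR M).

Definition mhomog (m : M) := exists g, mcomp GM g m = m.
Definition submodule (N : M -> Prop) :=
  [/\ N 0, (forall x y, N x -> N y -> N (x + y)) & (forall r x, N x -> N (r *: x))].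
Definition graded_submodule (N : M -> Prop) :=
  submodule N /\ (forall g x, N x -> N (mcomp GM g x)).
Definition colon (K : M -> Prop) : R -> Prop := fun r => forall m, K (r *: m).
Definition Ann : R -> Prop := colon (fun m => m = 0).
Definition graded_prime_sub (P : M -> Prop) :=
  [/\ graded_submodule P, proper P &
      forall r m, homog GR r -> mhomog m -> P (r *: m) -> P m \/ colon P r].
Definition GrM (K : M -> Prop) : M -> Prop :=
  fun m => forall P, graded_prime_sub P -> psubset K P -> P m.
Definition primeful (K : M -> Prop) :=
  forall p, graded_prime_ideal GR p -> psubset (colon K) p ->
    exists P, [/\ graded_prime_sub P, psubset K P & forall r, colon P r <-> p r].
Definition graded_qp_sub (Q : M -> Prop) :=
  [/\ graded_submodule Q, proper Q &
      forall r m, homog GR r -> mhomog m -> Q (r *: m) ->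
        Gr GR (colon Q) r \/ GrM Q m].
Definition qpSpec (Q : M -> Prop) := graded_qp_sub Q /\ primeful Q.
Definition qpV (K : M -> Prop) : (M -> Prop) -> Prop :=
  fun Q => qpSpec Q /\ psubset (Gr GR (colon K)) (Gr GR (colon Q)).
Definition IM (I : R -> Prop) : M -> Prop :=
  fun m => exists n (r : 'I_n -> R) (x : 'I_n -> M),
    (forall i, I (r i)) /\ m = \sum_(i < n) r i *: x i.
End GradedModuleDefs.

(* ---------- the graded quotient ring R/Ann(M) ----------
   R-bar is modelled as a graded ring Rb together with a surjective graded
   ring morphism pi : R -> Rb whose kernel is exactly Ann(M). *)
Definition graded_quotient (G : eqType) (GL : group_law G) (R Rb : comPzRingType)
    (GR : graded_ring GL R) (GRb : graded_ring GL Rb) (pi : {rmorphism R -> Rb})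
    (A : R -> Prop) :=
  [/\ forall y, exists r, pi r = y,
      forall r, pi r = 0 <-> A r &
      forall g r, pi (rcomp GR g r) = rcomp GRb g (pi r)].

Section QuotientMaps.
Variables (G : eqType) (GL : group_law G) (R Rb : comPzRingType)
  (GR : graded_ring GL R) (GRb : graded_ring GL Rb) (pi : {rmorphism R -> Rb})
  (M : lmodType R) (GM : graded_module GR M).
Definition psiq (Q : M -> Prop) : Rb -> Prop := img pi (colon Q).
Definition phiR (qb : Rb -> Prop) : Rb -> Prop := img pi (Gr GR (fun r => qb (pi r))).
Definition varphi (Q : M -> Prop) : Rb -> Prop := img pi (Gr GR (colon Q)).
Definition qpV_Rb (J : Rb -> Prop) : (Rb -> Prop) -> Prop :=
  fun qb => graded_qp_ideal GRb qb /\ VZ GRb J (phiR qb).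
End QuotientMaps.
Arguments Ann {R} M.
Arguments IM {R} M I.
Arguments psiq {R Rb} pi {M} Q.
Arguments varphi {G GL R Rb} GR pi {M} Q.
Arguments phiR {G GL R Rb} GR pi qb.
Arguments qpV_Rb {G GL R Rb} GR GRb pi J qb.

(* Main.v *)
Require Import Defs.
From mathcomp Require Import all_boot all_order all_algebra.
From mathcomp Require Import ring.
From mathcomp Require classical_sets.
From Stdlib Require Import Classical FunctionalExtensionality PropExtensionality.
Set Implicit Arguments. Unset Strict Implicit. Unset Printing Implicit Defensive.
Import GRing.Theory.
Local Open Scope ring_scope.

Lemma sum_ifeq (V : zmodType) (I : eqType) (s : seq I) (g : I) (F : I -> V) :
  uniq s -> \sum_(k <- s) (if k == g then F k else 0) = if g \in s then F g else 0.
Proof.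
move=> us; case: (boolP (g \in s)) => Hg.
  rewrite (bigD1_seq g) //= eqxx big1 ?addr0 // => i /negbTE ->; done.
rewrite big_seq big1 // => i Hi; case: eqP => // E; move: Hi; rewrite E (negbTE Hg).
done.
Qed.

Section GroupL.
Variables (G : eqType) (GL : group_law G).
Local Notation gm := (gmul GL).
Lemma gmulgV x : gm x (ginv GL x) = gone GL.
Proof.
set y := ginv GL x.
rewrite -[LHS](gmul1g GL) -{1}(gmulVg GL y) -gmulA (gmulA GL y x y).
by rewrite /y gmulVg gmul1g gmulVg.
Qed.
Lemma gmulg1 x : gm x (gone GL) = x.
Proof. by rewrite -(gmulVg GL x) gmulA gmulgV gmul1g. Qed.
Lemma gcancelr k g h : gm k h = gm g h -> k = g.
Proof.
move=> E; rewrite -(gmulg1 k) -(gmulg1 g) -(gmulgV h) !gmulA E //.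
Qed.
Lemma gcancel1 h g : gm h g = h -> g = gone GL.
Proof.
move=> E; rewrite -(gmul1g GL g) -(gmulVg GL h) -gmulA E //.
Qed.
End GroupL.

Section RingL.
Variables (G : eqType) (GL : group_law G) (R : comPzRingType) (GR : graded_ring GL R).
Local Notation rc := (rcomp GR).
Local Notation gm := (gmul GL).

Lemma rcomp0 g : rc g 0 = 0.
Proof.
have H := rcompD GR g 0 0; rewrite addr0 in H.
by rewrite -[LHS](addrK (rc g 0)) -H subrr.
Qed.

Lemma rcomp_sum g I (s : seq I) (P : pred I) F :
  rc g (\sum_(i <- s | P i) F i) = \sum_(i <- s | P i) rc g (F i).
Proof. exact: (big_morph _ (rcompD GR g) (rcomp0 g)). Qed.

Lemma homog_comp g h y : rc g y = y -> rc h y = if h == g then y else 0.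
Proof. by move=> Hy; rewrite -{1}Hy rcomp_id Hy. Qed.

Lemma homog_rc g x : homog GR (rc g x).
Proof. by exists g; rewrite rcomp_id eqxx. Qed.

Lemma homogM a b : homog GR a -> homog GR b -> homog GR (a * b).
Proof. by move=> [g Ha] [h Hb]; exists (gm g h); rewrite -Ha -Hb rcompM. Qed.

Lemma homogX a n : homog GR a -> homog GR (a ^+ n.+1).
Proof.
move=> ha; elim: n => [|n IH]; first by rewrite expr1.
by rewrite exprS; apply: homogM.
Qed.

Lemma rcompMh k g r c : rc k c = c -> exists r', rc g (r * c) = r' * c.
Proof.
move=> Hc; have [s [_ _ ds]] := rcomp_dec GR r.
exists (\sum_(h <- s | g == gm h k) rc h r).
rewrite {1}ds mulr_suml rcomp_sum [in RHS]big_mkcond mulr_suml.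
apply: eq_bigr => h _.
rewrite -{1}Hc -(rcompM GR h k r c) rcomp_id (rcompM GR) Hc.
by case: (g == gm h k); rewrite ?mul0r.
Qed.

Lemma rcomp1 : rc (gone GL) 1 = 1.
Proof.
have [s [us s0 ds]] := rcomp_dec GR 1.
have Hh : forall x, homog GR x -> x = x * rc (gone GL) 1.
  move=> x [h Hx].
  transitivity (rc h (x * 1)); first by rewrite mulr1 Hx.
  rewrite {1}ds mulr_sumr rcomp_sum.
  transitivity (\sum_(g <- s) if g == gone GL then x * rc g 1 else 0).
    apply: eq_bigr => g _.
    rewrite -{1}Hx -(rcompM GR h g x 1) rcomp_id (rcompM GR) Hx.
    have -> : (h == gm h g) = (g == gone GL).
      apply/eqP/eqP => [E|->]; first exact: (gcancel1 (esym E)).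
      by rewrite gmulg1.
    done.
  rewrite sum_ifeq //; case: ifP => // /negbT Hn.
  by rewrite s0 // mulr0.
symmetry.
transitivity (\sum_(g <- s) rc g 1 * rc (gone GL) 1).
  rewrite [LHS]ds; by apply: eq_bigr => g _; apply: Hh; apply: homog_rc.
by rewrite -mulr_suml -ds mul1r.
Qed.

Lemma ideal_sum (X : R -> Prop) I (s : seq I) (P : pred I) F :
  ideal X -> (forall i, P i -> X (F i)) -> X (\sum_(i <- s | P i) F i).
Proof. by move=> [X0 XD _] HF; apply: (big_ind X X0 XD). Qed.

Lemma ideal_dec (X : R -> Prop) x : ideal X -> (forall g, X (rc g x)) -> X x.
Proof.
move=> HX Hg; have [s [_ _ ->]] := rcomp_dec GR x.
by apply: ideal_sum.
Qed.

Lemma KL (J : R -> Prop) y : graded_ideal GR J -> homog GR y -> (forall n, ~ J (y ^+ n.+1)) ->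
  exists p, [/\ graded_prime_ideal GR p, psubset J p & ~ p y].
Proof.
move=> [[J0 JD JM] Jg] hy Jy.
pose P0 (X : R -> Prop) :=
  [/\ graded_ideal GR X, psubset J X & forall n, ~ X (y ^+ n.+1)].
pose P (X : R -> Prop) := (forall x, ~ X x) \/ P0 X.
have [A [PA Amax]] : exists A, P A /\ forall B, classical_sets.proper A B -> ~ P B.
  apply: classical_sets.Zorn_bigcup => F FP Ftot.
  have HU : forall x, classical_sets.bigcup F id x <-> exists2 X, F X & X x.
    by move=> x; split.
  have key : forall X x, F X -> X x -> P0 X.
    by move=> X x FX Xx; case: (FP X FX) => // H; case: (H x).
  case: (classic (exists X, F X /\ exists x, X x)) => [[X0 [FX0 [x0 X0x0]]]|H]; last first.
    by left => x /HU [X FX Xx]; apply: H; exists X; split => //; exists x.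
  right; have [[[X00 _ _] _] JX0 _] := key _ _ FX0 X0x0.
  split.
  - split; first split.
    + by apply/HU; exists X0.
    + move=> a b /HU [X1 F1 a1] /HU [X2 F2 b2]; apply/HU.
      case: (Ftot X1 X2 F1 F2) => S.
      * have [[[_ D _] _] _ _] := key _ _ F2 b2.
        by exists X2 => //; apply: D => //; apply: S.
      * have [[[_ D _] _] _ _] := key _ _ F1 a1.
        by exists X1 => //; apply: D => //; apply: S.
    + move=> r x /HU [X1 F1 x1]; apply/HU; exists X1 => //.
      by have [[[_ _ Mu] _] _ _] := key _ _ F1 x1; apply: Mu.
    + move=> g x /HU [X1 F1 x1]; apply/HU; exists X1 => //.
      by have [[_ Gg] _ _] := key _ _ F1 x1; apply: Gg.
  - by move=> x Jx; apply/HU; exists X0 => //; apply: JX0.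
  - move=> n /HU [X1 F1 x1].
    by have [_ _ N] := key _ _ F1 x1; apply: (N n).
have P0J : P0 J by split => //; split.
move: PA; rewrite /P /P0; case=> [A0|[[[A0 AD AM] Ag] JA Ay]].
  exfalso; apply: (Amax J); last by right.
  split; first by move=> x /A0.
  by move=> S; apply: (A0 0); apply: S.
have ext : forall c, homog GR c -> ~ A c ->
    exists n r1 p1, A p1 /\ y ^+ n.+1 = p1 + r1 * c.
  move=> c [k hc] nc.
  pose B x := exists p0 r, A p0 /\ x = p0 + r * c.
  have nPB : ~ P B.
    apply: Amax; split.
      by move=> x Ax; exists x, 0; rewrite mul0r addr0.
    move=> S; apply: nc; apply: S; exists 0, 1; split => //.
    by rewrite add0r mul1r.
  have giB : graded_ideal GR B.
    split; first split.
    + by exists 0, 0; rewrite mul0r addr0.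
    + move=> a b [p1 [r1 [A1 ->]]] [p2 [r2 [A2 ->]]].
      exists (p1 + p2), (r1 + r2); split; first exact: AD.
      by rewrite mulrDl addrACA.
    + move=> r x [p1 [r1 [A1 ->]]]; exists (r * p1), (r * r1); split; first exact: (AM).
      by rewrite mulrDr mulrA.
    + move=> g x [p1 [r1 [A1 ->]]].
      have [r' Hr'] := rcompMh g r1 hc.
      exists (rc g p1), r'; split; first exact: Ag.
      by rewrite rcompD Hr'.
  have JB : psubset J B.
    by move=> x Jx; exists x, 0; split; [apply: JA | rewrite mul0r addr0].
  apply: NNPP => Hne; apply: nPB; right; split => // n [p1 [r1 [A1 E]]].
  by apply: Hne; exists n, r1, p1.
exists A; split => //; last by move=> Hy; apply: (Ay 0); rewrite expr1.
split => //.
- by exists y => Hy; apply: (Ay 0); rewrite expr1.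
- move=> a b ha hb Aab; apply: NNPP => /not_or_and [na nb].
  have [n [r1 [p1 [A1 E1]]]] := ext a ha na.
  have [m [r2 [p2 [A2 E2]]]] := ext b hb nb.
  apply: (Ay (n + m).+1).
  have -> : y ^+ (n + m).+2 = y ^+ n.+1 * y ^+ m.+1 by rewrite -exprD addSn addnS.
  rewrite E1 E2.
  have -> : (p1 + r1 * a) * (p2 + r2 * b) =
      (p2 + r2 * b) * p1 + ((r1 * a) * p2 + (r1 * r2) * (a * b)) by ring.
  apply: (AD); first exact: (AM).
  apply: (AD).
    by apply: (AM).
  by apply: (AM).
Qed.

Lemma prime_pow (p : R -> Prop) a n :
  graded_prime_ideal GR p -> homog GR a -> p (a ^+ n.+1) -> p a.
Proof.
move=> [_ _ Hp] ha; elim: n => [|n IH]; first by rewrite expr1.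
by rewrite exprS => H; case: (Hp _ _ ha (homogX n ha) H).
Qed.

Lemma GrE (J : R -> Prop) x : graded_ideal GR J ->
  (Gr GR J x <-> forall p, graded_prime_ideal GR p -> psubset J p -> p x).
Proof.
move=> HJ; split.
- move=> Hx p Hp JP; have [[pi _] _ _] := Hp.
  apply: (ideal_dec pi) => g.
  have [n Hn] := Hx g.
  exact: (prime_pow Hp (homog_rc g x) (JP _ Hn)).
- move=> H g; apply: NNPP => Hn.
  have Hn' : forall n, ~ J (rc g x ^+ n.+1).
    by move=> n Jn; apply: Hn; exists n.
  have [p [Hp JP npx]] := KL HJ (homog_rc g x) Hn'.
  apply: npx; have [[_ pg] _ _] := Hp.
  by apply: pg; apply: H.
Qed.

Lemma Gr_gi (J : R -> Prop) : graded_ideal GR J -> graded_ideal GR (Gr GR J).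
Proof.
move=> HJ; split; first split.
- by apply/(GrE _ HJ) => p [[[p0 _ _] _] _ _].
- move=> x y /(GrE _ HJ) Hx /(GrE _ HJ) Hy; apply/(GrE _ HJ) => p Hp JP.
  have [[[_ pD _] _] _ _] := Hp; apply: pD; [exact: Hx | exact: Hy].
- move=> r x /(GrE _ HJ) Hx; apply/(GrE _ HJ) => p Hp JP.
  have [[[_ _ pM] _] _ _] := Hp; apply: pM; exact: Hx.
- move=> g x /(GrE _ HJ) Hx; apply/(GrE _ HJ) => p Hp JP.
  have [[_ pg] _ _] := Hp; apply: pg; exact: Hx.
Qed.

Lemma sub_Gr (J : R -> Prop) : graded_ideal GR J -> psubset J (Gr GR J).
Proof. by move=> [_ Jg] x Jx g; exists 0%N; rewrite expr1; apply: Jg. Qed.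

Lemma Gr_homog (J : R -> Prop) y : homog GR y -> Gr GR J y -> exists n, J (y ^+ n.+1).
Proof. by move=> [k hy] H; have := H k; rewrite hy. Qed.

Lemma Gr_pow (J : R -> Prop) a n :
  graded_ideal GR J -> homog GR a -> Gr GR J (a ^+ n.+1) -> Gr GR J a.
Proof.
move=> HJ ha /(GrE _ HJ) H; apply/(GrE _ HJ) => p Hp JP.
exact: (prime_pow Hp ha (H p Hp JP)).
Qed.
End RingL.

Section ModL.
Variables (G : eqType) (GL : group_law G) (R : comPzRingType) (GR : graded_ring GL R)
  (M : lmodType R) (GM : graded_module GR M).
Local Notation rc := (rcomp GR).
Local Notation mc := (mcomp GM).
Local Notation gm := (gmul GL).

Lemma mcomp0 g : mc g 0 = 0.
Proof.
have H := mcompD GM g 0 0; rewrite addr0 in H.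
by rewrite -[LHS](addrK (mc g 0)) -H subrr.
Qed.

Lemma mcomp_sum g I (s : seq I) (P : pred I) F :
  mc g (\sum_(i <- s | P i) F i) = \sum_(i <- s | P i) mc g (F i).
Proof. exact: (big_morph _ (mcompD GM g) (mcomp0 g)). Qed.

Lemma mhomog_mc h m : mhomog GM (mc h m).
Proof. by exists h; rewrite mcomp_id eqxx. Qed.

Lemma mhomogZ r m : homog GR r -> mhomog GM m -> mhomog GM (r *: m).
Proof. by move=> [g Hr] [h Hm]; exists (gm g h); rewrite -Hr -Hm mcompZ. Qed.

Lemma sub_sum (K : M -> Prop) I (s : seq I) (P : pred I) F :
  submodule K -> (forall i, P i -> K (F i)) -> K (\sum_(i <- s | P i) F i).
Proof. by move=> [K0 KD _] HF; apply: (big_ind K K0 KD). Qed.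

Lemma colon_dec (K : M -> Prop) r : submodule K ->
  (forall m, mhomog GM m -> K (r *: m)) -> colon K r.
Proof.
move=> HK H m; have [s [_ _ ->]] := mcomp_dec GM m.
rewrite scaler_sumr; apply: sub_sum => // h _; apply: H; exact: mhomog_mc.
Qed.

Lemma colon_gi (K : M -> Prop) : graded_submodule GM K -> graded_ideal GR (colon K).
Proof.
move=> [[K0 KD KZ] Kg]; have HK : submodule K by split.
split; first split.
- by move=> m; rewrite scale0r.
- by move=> x y Hx Hy m; rewrite scalerDl; apply: KD.
- by move=> r x Hx m; rewrite -scalerA; apply: KZ.
- move=> g r Hr; apply: colon_dec => // m [h hm].
  have [s [us s0 ds]] := rcomp_dec GR r.
  have E : mc (gm g h) (r *: m) = if g \in s then rc g r *: m else 0.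
    rewrite {1}ds scaler_suml mcomp_sum -(@sum_ifeq _ _ s g (fun k => rc k r *: m) us).
    apply: eq_bigr => k _.
    rewrite -{1}hm -(mcompZ GM k h r m) mcomp_id (mcompZ GM) hm.
    have -> : (gm g h == gm k h) = (k == g).
      by apply/eqP/eqP => [E|->] //; exact: (gcancelr (esym E)).
    done.
  case: (boolP (g \in s)) => Hg.
    by have := Kg (gm g h) _ (Hr m); rewrite E Hg.
  by rewrite s0 // scale0r.
Qed.

Lemma Ann_sub (K : M -> Prop) : submodule K -> psubset (Ann M) (colon K).
Proof. by move=> [K0 _ _] a Ha m; rewrite (Ha m). Qed.

Section QP.
Variable Q : M -> Prop.
Hypothesis HQ : qpSpec GM Q.
Local Notation J := (colon Q).

Lemma Q_gs : graded_submodule GM Q.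
Proof. by case: HQ => [[]]. Qed.
Lemma Q_s : submodule Q.
Proof. by case: Q_gs. Qed.
Lemma J_gi : graded_ideal GR J.
Proof. exact: (colon_gi Q_gs). Qed.

Lemma notJ1 : ~ J 1.
Proof.
case: HQ => [[_ [m nm] _] _] H; apply: nm.
by have := H m; rewrite scale1r.
Qed.

Lemma notGr1 : ~ Gr GR J 1.
Proof.
move=> H; have [n Hn] := H (gone GL); rewrite rcomp1 expr1n in Hn.
exact: notJ1.
Qed.

Lemma keyL b : homog GR b -> (forall m, mhomog GM m -> GrM GM Q (b *: m)) ->
  Gr GR J b.
Proof.
move=> hb H; apply/(GrE _ J_gi) => p Hp JP.
case: HQ => _ prf.
have [P [HP QP cP]] := prf p Hp JP.
apply/cP; apply: colon_dec; first by case: HP => [[]].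
by move=> m hm; apply: (H m hm P HP QP).
Qed.

Lemma Gr_prime : graded_prime_ideal GR (Gr GR J).
Proof.
split; first exact: (Gr_gi J_gi).
  by exists 1; exact: notGr1.
move=> a b ha hb Hab.
have [n Hn] := Gr_homog (homogM ha hb) Hab; rewrite exprMn in Hn.
case: (classic (Gr GR J a)) => Ha; [by left | right].
apply: (Gr_pow (n:=n) J_gi hb); apply: keyL; first exact: homogX.
move=> m hm.
have HQm : Q (a ^+ n.+1 *: (b ^+ n.+1 *: m)) by rewrite scalerA; apply: Hn.
case: HQ => [[_ _ qp] _].
case: (qp _ _ (homogX n ha) (mhomogZ (homogX n hb) hm) HQm) => // H.
by exfalso; apply: Ha; exact: (Gr_pow J_gi ha H).
Qed.

Lemma J_qp a b : homog GR a -> homog GR b -> J (a * b) ->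
  Gr GR J a \/ Gr GR J b.
Proof.
move=> ha hb Hab; have [_ _ Hp] := Gr_prime.
by apply: Hp => //; apply: (sub_Gr J_gi).
Qed.

Lemma E4 (I : R -> Prop) (K : M -> Prop) : graded_ideal GR I ->
  (forall x, I x -> colon K x) ->
  (forall P, graded_prime_sub GM P -> (forall x, I x -> colon P x) -> psubset K P) ->
  (psubset (Gr GR (colon K)) (Gr GR J) <-> psubset I (Gr GR J)).
Proof.
move=> [_ Ig] HI HK; split.
- move=> H x Ix; apply: H => g; exists 0%N; rewrite expr1; apply: HI; exact: Ig.
- move=> H x Hx; apply/(GrE _ J_gi) => p Hp JP.
  have [[pi pg] _ _] := Hp; apply: (ideal_dec pi) => g.
  have [n Hn] := Hx g.
  case: HQ => _ prf.
  have [P [HP QP cP]] := prf p Hp JP.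
  have IP : forall y, I y -> colon P y.
    by move=> y Iy; apply/cP; apply: ((GrE _ J_gi).1 (H y Iy) p Hp JP).
  apply: (prime_pow Hp (homog_rc GR g x)); apply/cP => m.
  by apply: (HK P HP IP); apply: Hn.
Qed.
End QP.
End ModL.

Section Quot.
Variables (G : eqType) (GL : group_law G) (R Rb : comPzRingType)
  (GR : graded_ring GL R) (GRb : graded_ring GL Rb) (pi : {rmorphism R -> Rb})
  (M : lmodType R) (GM : graded_module GR M).
Hypothesis Hq : graded_quotient GR GRb pi (Ann M).
Local Notation rc := (rcomp GR).

Lemma lift y : exists r, pi r = y.
Proof. by case: Hq. Qed.

Lemma img_pi (X : R -> Prop) x : ideal X -> psubset (Ann M) X ->
  (img pi X (pi x) <-> X x).
Proof.
move=> [_ XD _] AX; split; last by move=> Xx; exists x.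
move=> [y [Xy E]].
have Ha : Ann M (x - y).
  by case: Hq => _ H _; apply/H; rewrite rmorphB E subrr.
by rewrite -(subrK y x); apply: XD => //; apply: AX.
Qed.

Lemma img_gi (X : R -> Prop) : graded_ideal GR X -> psubset (Ann M) X ->
  graded_ideal GRb (img pi X).
Proof.
move=> [[X0 XD XM] Xg] AX; split; first split.
- by exists 0; rewrite rmorph0.
- move=> a b [x [Xx <-]] [y [Xy <-]]; exists (x + y); split; [exact: XD|].
  by rewrite rmorphD.
- move=> r' a [x [Xx <-]]; have [r <-] := lift r'.
  by exists (r * x); split; [exact: XM | rewrite rmorphM].
- move=> g a [x [Xx <-]]; exists (rc g x); split; first exact: Xg.
  by case: Hq => _ _ ->.
Qed.

Lemma homog_lift a' : homog GRb a' -> exists a, homog GR a /\ pi a = a'.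
Proof.
move=> [g ha]; have [r Hr] := lift a'.
exists (rc g r); split; first exact: homog_rc.
by case: Hq => _ _ ->; rewrite Hr.
Qed.

Lemma img_gp (X : R -> Prop) : graded_prime_ideal GR X -> psubset (Ann M) X ->
  graded_prime_ideal GRb (img pi X).
Proof.
move=> [HX [x nx] Hp] AX; have [Xi _] := HX.
split; first exact: img_gi.
  by exists (pi x) => /(img_pi _ Xi AX).
move=> a' b' /homog_lift [a [ha <-]] /homog_lift [b [hb <-]].
rewrite -rmorphM => /(img_pi _ Xi AX) Hab.
by case: (Hp _ _ ha hb Hab) => H; [left; exists a|right; exists b].
Qed.

Lemma Gr_img (X : R -> Prop) x : ideal X -> psubset (Ann M) X ->
  (Gr GRb (img pi X) (pi x) <-> Gr GR X x).
Proof.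
move=> Xi AX; split => H g; have [n Hn] := H g; exists n.
- case: Hq => _ _ E; rewrite -E -rmorphXn in Hn.
  by move/(img_pi _ Xi AX): Hn.
- case: Hq => _ _ E; rewrite -E -rmorphXn; by apply/(img_pi _ Xi AX).
Qed.

Section QQ.
Variable Q : M -> Prop.
Hypothesis HQ : qpSpec GM Q.

Lemma AJ : psubset (Ann M) (colon Q).
Proof. exact: (Ann_sub (Q_s HQ)). Qed.
Lemma AGrJ : psubset (Ann M) (Gr GR (colon Q)).
Proof. by move=> a Ha; apply: (sub_Gr (J_gi HQ)); apply: AJ. Qed.
Lemma Ji : ideal (colon Q).
Proof. by case: (J_gi HQ). Qed.
Lemma GrJi : ideal (Gr GR (colon Q)).
Proof. by case: (Gr_gi (J_gi HQ)). Qed.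

Lemma colon_pre : (fun r => psiq pi Q (pi r)) = colon Q.
Proof.
apply: functional_extensionality => r; apply: propositional_extensionality.
exact: (img_pi _ Ji AJ).
Qed.

Lemma E1 : phiR GR pi (psiq pi Q) = varphi GR pi Q.
Proof. by rewrite /phiR colon_pre. Qed.

Lemma E2 : graded_qp_ideal GRb (psiq pi Q).
Proof.
rewrite /psiq; split.
- exact: (img_gi (J_gi HQ) AJ).
- by exists (pi 1) => /(img_pi _ Ji AJ); exact: (notJ1 HQ).
- move=> a' b' /homog_lift [a [ha <-]] /homog_lift [b [hb <-]].
  rewrite -rmorphM => /(img_pi _ Ji AJ) Hab.
  by case: (J_qp HQ ha hb Hab) => H; [left|right]; apply/(Gr_img _ Ji AJ).
Qed.

Lemma E3 (I : R -> Prop) :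
  VZ GRb (img pi I) (varphi GR pi Q) <-> psubset I (Gr GR (colon Q)).
Proof.
split.
- move=> [_ S] x Ix; have := S (pi x) (ex_intro _ x (conj Ix erefl)).
  by move/(img_pi _ GrJi AGrJ).
- move=> S; split; first exact: (img_gp (Gr_prime HQ) AGrJ).
  by move=> _ [x [Ix <-]]; exists x; split => //; apply: S.
Qed.
End QQ.
End Quot.

Theorem theorem3p11 (G : eqType) (GL : group_law G) (R : comPzRingType)
  (GR : graded_ring GL R) (M : lmodType R) (GM : graded_module GR M)
  (Rb : comPzRingType) (GRb : graded_ring GL Rb) (pi : {rmorphism R -> Rb}) :
  graded_quotient GR GRb pi (Ann M) ->
  (* the displayed chain of equalities, as subsets of qp.Spec_g(M) *)
  (forall I : R -> Prop, graded_ideal GR I -> psubset (Ann M) I ->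
   forall Q : M -> Prop,
     ((qpSpec GM Q /\ VZ GRb (img pi I) (varphi GR pi Q)) <->
      (qpSpec GM Q /\ VZ GRb (img pi I) (phiR GR pi (psiq pi Q))))
  /\ ((qpSpec GM Q /\ VZ GRb (img pi I) (phiR GR pi (psiq pi Q))) <->
      (qpSpec GM Q /\ qpV_Rb GR GRb pi (img pi I) (psiq pi Q)))
  /\ ((qpSpec GM Q /\ qpV_Rb GR GRb pi (img pi I) (psiq pi Q)) <->
      qpV GM (IM M I) Q))
  /\
  (* continuity: preimages of Zariski-closed sets are quasi-Zariski closed *)
  (forall J : Rb -> Prop, graded_ideal GRb J ->
   exists K : M -> Prop, graded_submodule GM K /\
     forall Q : M -> Prop,
       (qpSpec GM Q /\ VZ GRb J (varphi GR pi Q)) <-> qpV GM K Q).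
Proof.
move=> Hq; split.
- move=> I HI AI Q.
  have IMi : forall x, I x -> colon (IM M I) x.
    move=> x Ix m; exists 1%N, (fun _ => x), (fun _ => m); split => //.
    by rewrite big_ord1.
  have IMii : forall P, graded_prime_sub GM P -> (forall x, I x -> colon P x) ->
      psubset (IM M I) P.
    move=> P [[HP _] _ _] IP m [n [r [xx [Hr ->]]]].
    by apply: sub_sum => // i _; apply: IP.
  split; [|split].
  + split => [][HQ V]; split => //; first by rewrite (E1 Hq HQ).
    by rewrite -(E1 Hq HQ).
  + split => [][HQ V]; split => //; last by case: V.
    by split => //; apply: (E2 Hq HQ).
  + split.
    * move=> [HQ [_ V]]; split => //.
      rewrite (E1 Hq HQ) in V.
      by apply/(E4 HQ HI IMi IMii); apply/(E3 Hq HQ).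
    * move=> [HQ H]; split => //; split; first exact: (E2 Hq HQ).
      rewrite (E1 Hq HQ); apply/(E3 Hq HQ).
      by apply/(E4 HQ HI IMi IMii).
- move=> J' [[J0 JD JM] Jg].
  pose I := fun r => J' (pi r).
  pose K := fun m => forall P, graded_prime_sub GM P -> (forall x, I x -> colon P x) -> P m.
  exists K; split.
    split; first split.
    + by move=> P [[[P0 _ _] _] _ _].
    + by move=> x y Kx Ky P HP IP; have [[[_ PD _] _] _ _] := HP; apply: PD;
        [apply: Kx | apply: Ky].
    + by move=> r x Kx P HP IP; have [[[_ _ PZ] _] _ _] := HP; apply: PZ; apply: Kx.
    + by move=> g x Kx P HP IP; have [[_ Pg] _ _] := HP; apply: Pg; apply: Kx.
  move=> Q.
  have imgI : img pi I = J'.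
    apply: functional_extensionality => y; apply: propositional_extensionality.
    split; first by move=> [x [Jx <-]].
    by move=> Jy; have [x Hx] := lift Hq y; exists x; rewrite /I Hx.
  have HI : graded_ideal GR I.
    split; first split.
    + by rewrite /I rmorph0.
    + by move=> x y Ix Iy; rewrite /I rmorphD; apply: JD.
    + by move=> r x Ix; rewrite /I rmorphM; apply: JM.
    + by move=> g x Ix; rewrite /I; case: Hq => _ _ ->; apply: Jg.
  have Ki : forall x, I x -> colon K x.
    by move=> x Ix m P HP IP; apply: IP.
  have Kii : forall P, graded_prime_sub GM P -> (forall x, I x -> colon P x) ->
      psubset K P.
    by move=> P HP IP m Km; apply: Km.
  split.
  + move=> [HQ V]; split => //; rewrite -imgI in V.
    by apply/(E4 HQ HI Ki Kii); apply/(E3 Hq HQ).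
  + move=> [HQ H]; split => //; rewrite -imgI; apply/(E3 Hq HQ).
    by apply/(E4 HQ HI Ki Kii).
Qed.
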